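(* Let $\omega\in\mathbb{C}$ and let $\{P_n\}_{n\geqslant0}$ be a $D_\omega$-classical monic OPS with recurrence $P_{n+2}=(x-\beta_{n+1})P_{n+1}-\gamma_{n+1}P_n$ ($n\geqslant0$), $P_1=x-\beta_0$, $P_0=1$, and let $Q_n:=(n+1)^{-1}D_\omega P_{n+1}$, which is a monic OPS with recurrence $Q_{n+2}=(x-\tilde\beta_{n+1})Q_{n+1}-\tilde\gamma_{n+1}Q_n$ ($n\geqslant0$), $Q_1=x-\tilde\beta_0$, $Q_0=1$. Put $\tilde\alpha^1_n:=(n+1)(\beta_{n+1}-\tilde\beta_n-\omega)$ and $\tilde\alpha^0_n:=(n+1)\gamma_{n+2}-(n+2)\tilde\gamma_{n+1}$ for $n\geqslant0$, so that $P_{n+2}=Q_{n+2}+\tilde\alpha^1_{n+1}Q_{n+1}+\tilde\alpha^0_nQ_n$ ($n\geqslant0$) and $P_1=Q_1+\tilde\alpha^1_0$. Suppose $\Phi(x)=a_2x^2+a_1x+a_0$ is a polynomial of degree at most two and $\alpha^2_{n+2},\alpha^1_{n+1},\alpha^0_n$ ($n\geqslant0$) are complex numbers with $\alpha^0_n\neq0$ such that $$\Phi(x)Q_n(x)=\alpha^2_{n+2}P_{n+2}(x)+\alpha^1_{n+1}P_{n+1}(x)+\alpha^0_nP_n(x),\quad n\geqslant0.$$ Then, with the convention $\tilde\gamma_0:=0$, $$\alpha^2_{n+2}=a_2\ (n\geqslant0),\qquad \alpha^1_{n+1}+a_2\tilde\alpha^1_{n+1}=a_2(\tilde\beta_{n+1}+\tilde\beta_n)+a_1\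 (n\geqslant0),$$ $$\alpha^1_{n+1}\tilde\alpha^1_n+a_2\tilde\alpha^0_n+\alpha^0_n=a_2(\tilde\gamma_{n+1}+\tilde\gamma_n+\tilde\beta_n^2)+a_1\tilde\beta_n+a_0\ (n\geqslant0),$$ $$\alpha^1_{n+1}\tilde\alpha^0_{n-1}+\alpha^0_n\tilde\alpha^1_{n-1}=a_2\tilde\gamma_n(\tilde\beta_n+\tilde\beta_{n-1})+a_1\tilde\gamma_n\ (n\geqslant1),$$ $$\alpha^0_{n+1}\tilde\alpha^0_{n-1}=a_2\tilde\gamma_{n+1}\tilde\gamma_n\ (n\geqslant1).$$
   Context: For $\omega\neq0$, $(D_\omega f)(x)=\frac{f(x+\omega)-f(x)}{\omega}$ on complex polynomials; $D_0=d/dx$. A monic OPS is a sequence of monic polynomials $P_n$, $\deg P_n=n$, with a linear functional $u$ such that $\langle u,P_nP_m\rangle=k_n\delta_{nm}$, $k_n\neq0$; such a sequence satisfies a three-term recurrence with $\gamma_n\neq0$. An OPS $\{P_n\}$ is $D_\omega$-classical if $\{(n+1)^{-1}D_\omega P_{n+1}\}_{n\geqslant0}$ is also an OPS; in that case a relation of the displayed form $\Phi Q_n=\alpha^2_{n+2}P_{n+2}+\alpha^1_{n+1}P_{n+1}+\alpha^0_nP_n$ with $\deg\Phi\leqslant2$ exists (first structure relation). *)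

(* Defs.v *)
(* The complex field is modelled as  R[i] = complex R  for
   R : realType (a complete archimedean ordered field, i.e. the reals). *)
From HB Require Import structures.
From mathcomp Require Import all_boot all_order all_algebra.
From mathcomp Require Import complex.
From mathcomp Require Import reals.
Set Implicit Arguments. Unset Strict Implicit. Unset Printing Implicit Defensive.
Import Order.TTheory GRing.Theory Num.Theory.
Local Open Scope ring_scope.
Local Open Scope complex_scope.

Definition Dw {C : fieldType} (w : C) (f : {poly C}) : {poly C} :=
  if w == 0 then f^`() else w^-1 *: (f \Po ('X + w%:P) - f).

Definition is_monic_OPS {C : fieldType} (P : nat -> {poly C}) : Prop :=
  (forall n, P n \is monic /\ size (P n) = n.+1) /\
  exists u : {poly C} -> C,
    (forall (a : C) (p q : {poly C}), u (a *: p + q) = a * u p + u q) /\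
    (forall n m, n <> m -> u (P n * P m) = 0) /\
    (forall n, u (P n * P n) <> 0).

Definition Dw_derived {C : fieldType} (w : C) (P : nat -> {poly C}) (n : nat)
  : {poly C} := (n.+1%:R)^-1 *: Dw w (P n.+1).

Definition is_Dw_classical {C : fieldType} (w : C) (P : nat -> {poly C}) : Prop :=
  is_monic_OPS P /\ is_monic_OPS (Dw_derived w P).

(* Main.v *)
Require Import Defs.
From HB Require Import structures.
From mathcomp Require Import all_boot all_order all_algebra.
From mathcomp Require Import complex reals.
From mathcomp Require Import ring zify.
Import Order.TTheory GRing.Theory Num.Theory.
Local Open Scope ring_scope.

Lemma DwD (C : fieldType) (w : C) f g : Dw w (f + g) = Dw w f + Dw w g.
Proof.
rewrite /Dw; case: eqP => _; first by rewrite derivD.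
rewrite comp_polyD -!mul_polyC; ring.
Qed.

Lemma DwZ (C : fieldType) (w : C) a f : Dw w (a *: f) = a *: Dw w f.
Proof.
rewrite /Dw; case: eqP => _; first by rewrite derivZ.
rewrite comp_polyZ -!mul_polyC; ring.
Qed.

Lemma DwN (C : fieldType) (w : C) f : Dw w (- f) = - Dw w f.
Proof. by rewrite -scaleN1r DwZ scaleN1r. Qed.

Lemma DwC (C : fieldType) (w : C) c : Dw w c%:P = 0.
Proof.
rewrite /Dw; case: eqP => _; first by rewrite derivC.
by rewrite comp_polyC subrr scaler0.
Qed.

Lemma DwX (C : fieldType) (w : C) f :
  Dw w ('X * f) = ('X + w%:P) * Dw w f + f.
Proof.
rewrite /Dw; case: eqP => [->|/eqP hw]; first by rewrite derivM derivX addr0; ring.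
rewrite comp_polyM comp_polyX -!mul_polyC.
have h1 : w^-1%:P * w%:P = 1 :> {poly C} by rewrite -polyCM mulVf.
transitivity (w^-1%:P * (('X + w%:P) * (f \Po ('X + w%:P)) - 'X * f)
   + (1 - w^-1%:P * w%:P) * f); last by ring.
by rewrite h1 subrr mul0r addr0.
Qed.

Lemma peel (C : fieldType) (Q : nat -> {poly C})
  (hQ : forall k, Q k \is monic /\ size (Q k) = k.+1) m c (r : {poly C}) :
  (size r <= m)%N -> c *: Q m + r = 0 -> c = 0 /\ r = 0.
Proof.
move=> hr h.
have := congr1 (fun p : {poly C} => p`_m) h.
rewrite coefD coefZ coef0 (nth_default _ hr) addr0.
have [hm hs] := hQ m.
have -> : (Q m)`_m = 1 by move/monicP: hm; rewrite /lead_coef hs.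
rewrite mulr1 => hc; split => //.
by move: h; rewrite hc scale0r add0r.
Qed.

Arguments peel {C Q} hQ {m c r}.

Lemma szQ (C : fieldType) (Q : nat -> {poly C})
  (hQ : forall k, Q k \is monic /\ size (Q k) = k.+1) k m c (r : {poly C}) :
  (k < m)%N -> (size r <= m)%N -> (size (c *: Q k + r)%R <= m)%N.
Proof.
move=> hk hr; apply: (leq_trans (size_polyD _ _)).
rewrite geq_max hr andbT.
by apply: (leq_trans (size_scale_leq _ _)); rewrite (hQ k).2.
Qed.

Arguments szQ {C Q} hQ {k m c r}.

Lemma lc2 (C : comPzRingType) (G x y c d : C) :
  x = 0 -> y = 0 -> G = c * x + d * y -> G = 0.
Proof. by move=> -> -> ->; rewrite !mulr0 addr0. Qed.

Lemma lc1 (C : comPzRingType) (G x c : C) :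
  x = 0 -> G = c * x -> G = 0.
Proof. by move=> -> ->; rewrite mulr0. Qed.

Lemma lc4 (C : comPzRingType) (G x y z t c d e f : C) :
  x = 0 -> y = 0 -> z = 0 -> t = 0 -> G = c * x + d * y + e * z + f * t -> G = 0.
Proof. by move=> -> -> -> -> ->; rewrite !mulr0 !addr0. Qed.

Ltac szt hQ := repeat (apply: (szQ hQ); first lia); rewrite ?size_poly0 //;
  apply: (leq_trans (size_scale_leq _ _)); rewrite (hQ _).2; lia.

Lemma extract (C : fieldType) (Q : nat -> {poly C})
  (hQ : forall k, Q k \is monic /\ size (Q k) = k.+1) n c4 c3 c2 c1 c0 :
  (n = 0%N -> c1 = 0) -> ((n <= 1)%N -> c0 = 0) ->
  c4 *: Q n.+2 + (c3 *: Q n.+1 + (c2 *: Q n + (c1 *: Q n.-1 + c0 *: Q n.-2))) = 0 ->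
  [/\ c4 = 0, c3 = 0, c2 = 0, ((1 <= n)%N -> c1 = 0) & ((2 <= n)%N -> c0 = 0)].
Proof.
move=> h1 h0.
have sz0 : (size (0%R : {poly C}) <= 0)%N by rewrite size_poly0.
case: n h1 h0 => [|[|n]] /= h1 h0.
- rewrite h1 // h0 // !scale0r !addr0 => h.
  case: (peel hQ _ h); [by szt hQ | move=> -> {}h].
  case: (peel hQ _ h); [by szt hQ | move=> -> {}h].
  have [-> {}h] := peel hQ sz0 (etrans (addr0 _) h).
  by split.
- rewrite h0 // !scale0r !addr0 => h.
  case: (peel hQ _ h); [by szt hQ | move=> -> {}h].
  case: (peel hQ _ h); [by szt hQ | move=> -> {}h].
  case: (peel hQ _ h); [by szt hQ | move=> -> {}h].
  have [-> {}h] := peel hQ sz0 (etrans (addr0 _) h).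
  by split.
- move=> h.
  case: (peel hQ _ h); [by szt hQ | move=> -> {}h].
  case: (peel hQ _ h); [by szt hQ | move=> -> {}h].
  case: (peel hQ _ h); [by szt hQ | move=> -> {}h].
  case: (peel hQ _ h); [by szt hQ | move=> -> {}h].
  case: (peel hQ _ (etrans (addr0 _) h)) => [|-> _]; first by rewrite size_poly0.
  by split.
Qed.

Theorem proposition2p1 (R : realType) (w : R[i])
  (P : nat -> {poly R[i]}) (beta gamma beta_t gamma_t : nat -> R[i])
  (Phi : {poly R[i]}) (alpha2 alpha1 alpha0 : nat -> R[i]) :
  is_Dw_classical w P ->
  P 0%N = 1 ->
  P 1%N = 'X - (beta 0%N)%:P ->
  (forall n, P n.+2 = ('X - (beta n.+1)%:P) * P n.+1 - gamma n.+1 *: P n) ->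
  let Q := Dw_derived w P in
  Q 0%N = 1 ->
  Q 1%N = 'X - (beta_t 0%N)%:P ->
  (forall n, Q n.+2 = ('X - (beta_t n.+1)%:P) * Q n.+1 - gamma_t n.+1 *: Q n) ->
  let alpha1_t := fun n : nat => n.+1%:R * (beta n.+1 - beta_t n - w) in
  let alpha0_t := fun n : nat => n.+1%:R * gamma n.+2 - n.+2%:R * gamma_t n.+1 in
  (size Phi <= 3)%N ->
  let a2 := Phi`_2 in let a1 := Phi`_1 in let a0 := Phi`_0 in
  (forall n, alpha0 n != 0) ->
  (forall n, Phi * Q n = alpha2 n.+2 *: P n.+2 + alpha1 n.+1 *: P n.+1
                         + alpha0 n *: P n) ->
  let gt := fun n : nat => if n == 0%N then 0 else gamma_t n in
  (forall n, alpha2 n.+2 = a2) /\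
  (forall n, alpha1 n.+1 + a2 * alpha1_t n.+1
             = a2 * (beta_t n.+1 + beta_t n) + a1) /\
  (forall n, alpha1 n.+1 * alpha1_t n + a2 * alpha0_t n + alpha0 n
             = a2 * (gt n.+1 + gt n + beta_t n ^+ 2) + a1 * beta_t n + a0) /\
  (forall n, (1 <= n)%N ->
     alpha1 n.+1 * alpha0_t n.-1 + alpha0 n * alpha1_t n.-1
     = a2 * gt n * (beta_t n + beta_t n.-1) + a1 * gt n) /\
  (forall n, (1 <= n)%N ->
     alpha0 n.+1 * alpha0_t n.-1 = a2 * gt n.+1 * gt n).
Proof.
move=> [_ hQ'] P0 P1 Prec Q Q0 Q1 Qrec a1t a0t hsz a2 a1 a0 _ hid gt.
have hQ : forall k, Q k \is monic /\ size (Q k) = k.+1 by case: hQ'.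
clear hQ'.
have DwP : forall k, Dw w (P k.+1) = k.+1%:R *: Q k.
  move=> k; rewrite /Q /Dw_derived scalerA mulfV ?scale1r //.
  by rewrite pnatr_eq0.
have DwP0 : Dw w (P 0%N) = 0 by rewrite P0 -polyC1 DwC.
clearbody Q.
have gt0 : gt 0%N = 0 by [].
have gtS : forall k, gt k.+1 = gamma_t k.+1 by [].
clearbody gt.
have XQ : forall n, 'X * Q n = Q n.+1 + beta_t n *: Q n + gt n *: Q n.-1.
  case=> [|k] /=; first by rewrite Q1 Q0 gt0 scale0r addr0 -mul_polyC; ring.
  by rewrite Qrec gtS -!mul_polyC; ring.
pose A1 n := if n is k.+1 then a1t k else 0.
pose A0 n := if n is k.+2 then a0t k else 0.
have PQ : forall n, P n = Q n + A1 n *: Q n.-1 + A0 n *: Q n.-2.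
  case=> [|k]; first by rewrite /= P0 Q0 !scale0r !addr0.
  have E := congr1 (Dw w) (Prec k).
  rewrite DwP mulrBl mul_polyC !DwD !DwN !DwZ DwX DwP in E.
  move/eqP: E; rewrite -subr_eq0 => /eqP E.
  have XQ0 := XQ k; move/eqP: XQ0; rewrite -subr_eq0 => /eqP XQ0.
  apply/eqP; rewrite -subr_eq0; apply/eqP.
  case: k E XQ0 => [|j] E XQ0.
    rewrite DwP0 in E.
    apply: (lc2 _ _ _ _ (-1) (-1) E XQ0).
    rewrite /= /A1 /A0 /a1t gt0.
    rewrite -!mul_polyC; ring.
  rewrite DwP in E.
  apply: (lc2 _ _ _ _ (-1) (- j.+2%:R) E XQ0).
  rewrite /= /A1 /A0 /a1t /a0t gtS.
  rewrite -!mul_polyC; ring.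
have hPhi : Phi = a2%:P * 'X^2 + a1%:P * 'X + a0%:P.
  apply/polyP => i; rewrite !coefD !coefCM coefXn coefX coefC.
  case: i => [|[|[|i]]] /=; rewrite ?mulr0 ?mulr1 ?addr0 ?add0r //.
  by rewrite nth_default // (leq_trans hsz).
have key : forall n,
  [/\ a2 - alpha2 n.+2 = 0,
      a2*(beta_t n.+1 + beta_t n) + a1 - alpha2 n.+2 * A1 n.+2 - alpha1 n.+1 = 0,
      a2*(gt n.+1 + gt n + beta_t n ^+ 2) + a1 * beta_t n + a0 - alpha2 n.+2 * A0 n.+2
        - alpha1 n.+1 * A1 n.+1 - alpha0 n = 0,
      ((1 <= n)%N -> a2*gt n*(beta_t n + beta_t n.-1) + a1 * gt n
         - alpha1 n.+1 * A0 n.+1 - alpha0 n * A1 n = 0) &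
      ((2 <= n)%N -> a2 * gt n * gt n.-1 - alpha0 n * A0 n = 0)].
  move=> n; refine (@extract _ Q hQ n _ _ _ _ _ _ _ _).
  - by move=> ->; rewrite /A0 /A1 /= gt0; ring.
  - by case: n => [|[|n]] //= _; rewrite gt0 /A0; ring.
  have H := hid n; move/eqP: H; rewrite -subr_eq0 => /eqP H.
  have X0 := XQ n; move/eqP: X0; rewrite -subr_eq0 => /eqP X0.
  have X1 := XQ n.+1; move/eqP: X1; rewrite -subr_eq0 => /eqP X1.
  have Xm : gt n *: ('X * Q n.-1 - (Q n + beta_t n.-1 *: Q n.-1 + gt n.-1 *: Q n.-2)) = 0.
    case: n {H X0 X1} => [|k]; first by rewrite gt0 scale0r.
    by rewrite /= XQ subrr scaler0.
  apply: (lc4 _ _ _ _ _ _ 1 (-(a2%:P * 'X + (a2 * beta_t n)%:P + a1%:P)) (- a2%:P) (- a2%:P) H X0 X1 Xm).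
  rewrite hPhi (PQ n.+2) (PQ n.+1) (PQ n) /=.
  rewrite -!mul_polyC; ring.
have K1 : forall n, alpha2 n.+2 = a2.
  by move=> n; have [h _ _ _ _] := key n; move/eqP: h; rewrite subr_eq0 => /eqP.
split; [exact: K1|split; [|split; [|split]]].
- move=> n; have [_ h _ _ _] := key n.
  apply/eqP; rewrite -subr_eq0; apply/eqP; apply: (lc1 _ _ _ (-1) h).
  rewrite K1 /A1; ring.
- move=> n; have [_ _ h _ _] := key n.
  apply/eqP; rewrite -subr_eq0; apply/eqP; apply: (lc1 _ _ _ (-1) h).
  rewrite K1 /A1 /A0 /=; ring.
- case=> [//|k] _; have [_ _ _ h _] := key k.+1.
  apply/eqP; rewrite -subr_eq0; apply/eqP; apply: (lc1 _ _ _ (-1) (h isT)).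
  rewrite /A1 /A0 /=; ring.
- case=> [//|k] _; have [_ _ _ _ h] := key k.+2.
  apply/eqP; rewrite -subr_eq0; apply/eqP; apply: (lc1 _ _ _ (-1) (h isT)).
  rewrite /A1 /A0 /=; ring.
Qed.
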